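(* Let $v_1,\dots,v_n$ be non-zero vectors in $\mathbb{C}^n$ and let $\mathcal{A}\subseteq M_n(\mathbb{C})$ be the algebra generated by $$A_1=\sum_{j=1}^n v_1(j)E_{1,j},\ \dots,\ A_n=\sum_{j=1}^n v_n(j)E_{n,j}.$$ Then there exist $k\in\{1,\dots,n\}$, a non-zero vector $v\in\mathbb{C}^k$ and a unitary $U\in M_n(\mathbb{C})$ such that $$\sum_{j=1}^k v(j)E_{1,j},\ \dots,\ \sum_{j=1}^k v(j)E_{k,j}\in U\mathcal{A}U^*.$$
   Context: $E_{i,j}$ denote the matrix units of $M_n(\mathbb{C})$; $v(j)$ denotes the $j$-th coordinate of a vector $v$. *)

(* Defs.v *)
(* C is modelled by algC (algebraic complex numbers,
   a numClosedFieldType with complex conjugation). *)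
From HB Require Import structures.
From mathcomp Require Import all_boot all_order all_algebra all_field.
Set Implicit Arguments. Unset Strict Implicit. Unset Printing Implicit Defensive.
Import Order.TTheory GRing.Theory Num.Theory.
Local Open Scope ring_scope.

Definition ctrmx n (U : 'M[algC]_n) : 'M[algC]_n := (map_mx Num.conj U)^T.

Definition unitary n (U : 'M[algC]_n) : Prop := U *m ctrmx U = 1%:M.

Definition rowUnit n (i : 'I_n) (v : 'rV[algC]_n) : 'M[algC]_n :=
  \sum_(j < n) v 0 j *: delta_mx i j.

Definition rowUnitk n k (hk : (k <= n)%N) (i : 'I_k) (v : 'rV[algC]_k) : 'M[algC]_n :=
  \sum_(j < k) v 0 j *: delta_mx (widen_ord hk i) (widen_ord hk j).

(* the (non-unital) subalgebra of M_n generated by a set of matrices: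
   the smallest subset containing the generators and closed under
   addition, scalar multiplication and matrix product *)
Inductive gen_alg n (G : 'M[algC]_n -> Prop) : 'M[algC]_n -> Prop :=
  | ga_gen M : G M -> gen_alg G M
  | ga_add M N : gen_alg G M -> gen_alg G N -> gen_alg G (M + N)
  | ga_scale (a : algC) M : gen_alg G M -> gen_alg G (a *: M)
  | ga_mul M N : gen_alg G M -> gen_alg G N -> gen_alg G (M *m N).

(* Main.v *)
Require Import Defs.
From HB Require Import structures.
From mathcomp Require Import all_boot all_order all_algebra all_field all_fingroup.
Import Order.TTheory GRing.Theory Num.Theory.
Local Open Scope ring_scope.

Lemma rowUnitE n (i : 'I_n) v a b : rowUnit i v a b = (a == i)%:R * v 0 b.
Proof.
rewrite /rowUnit summxE (bigD1 b) //= big1 => [|t tb]; last first.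
  by rewrite !mxE [b == t]eq_sym (negbTE tb) andbF mulr0.
by rewrite !mxE eqxx andbT addr0 eq_sym mulrC.
Qed.

Lemma rowUnitM n (i l : 'I_n) v w :
  rowUnit i v *m rowUnit l w = v 0 l *: rowUnit i w.
Proof.
apply/matrixP=> a b; rewrite !mxE (bigD1 l) //= big1 => [|t tl]; last first.
  by rewrite !rowUnitE (negbTE tl) mul0r mulr0.
by rewrite !rowUnitE eqxx mul1r addr0 mulrCA mulrA.
Qed.

Lemma conj_perm n (s : 'S_n) : ctrmx (perm_mx s) = perm_mx s^-1.
Proof. by rewrite /ctrmx map_perm_mx tr_perm_mx. Qed.

Lemma perm_unitary n (s : 'S_n) : unitary (perm_mx s).
Proof. by rewrite /unitary conj_perm -perm_mxM mulgV perm_mx1. Qed.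

Lemma conj_entry n (s : 'S_n) B a b :
  (perm_mx s *m B *m ctrmx (perm_mx s)) a b = B (s a) (s b).
Proof. by rewrite conj_perm -row_permE -col_permE !mxE. Qed.

Lemma rowUnitkE n k (hk : (k <= n)%N) (i : 'I_k) v a b :
  rowUnitk hk i v a b =
  if (b < k)%N =P true is ReflectT hb then (a == widen_ord hk i)%:R * v 0 (Ordinal hb) else 0.
Proof.
rewrite /rowUnitk summxE; case: eqP => [hb|hb].
  rewrite (bigD1 (Ordinal hb)) //= big1 => [|t tb]; last first.
    rewrite !mxE; case: (b =P widen_ord hk t) => [e|_]; last by rewrite andbF mulr0.
    by case/eqP: tb; apply/val_inj; rewrite /= e.
  rewrite !mxE addr0; have -> : b == widen_ord hk (Ordinal hb) by apply/eqP/val_inj.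
  by rewrite andbT mulrC.
rewrite big1 // => t _; rewrite !mxE.
case: (b =P widen_ord hk t) => [e|_]; last by rewrite andbF mulr0.
by case: hb; rewrite e /= ltn_ord.
Qed.

Lemma reach_alg n (vs : 'I_n -> 'rV[algC]_n) (G : 'M[algC]_n -> Prop)
  (hG : forall i, G (rowUnit i (vs i))) i j :
  connect [rel a b : 'I_n | vs a 0 b != 0] i j -> gen_alg G (rowUnit i (vs j)).
Proof.
case/connectP=> p; elim: p i => [|l p IH] i /= => [_ ->|/andP[eil pl] hj].
  exact/ga_gen/hG.
have H := IH l pl hj.
have -> : rowUnit i (vs j) =
   (vs i 0 l)^-1 *: (rowUnit i (vs i) *m rowUnit l (vs j)).
  by rewrite rowUnitM scalerA mulVf // scale1r.
exact/ga_scale/ga_mul/H/ga_gen/hG.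
Qed.

Theorem lemma4 (n : nat) (hn : (0 < n)%N) (vs : 'I_n -> 'rV[algC]_n)
    (hvs : forall i, vs i != 0) :
  let A := @gen_alg n (fun M => exists i : 'I_n, M = rowUnit i (vs i)) in
  exists k : nat, exists hk : (k <= n)%N, (0 < k)%N /\
    exists (v : 'rV[algC]_k) (U : 'M[algC]_n),
      [/\ v != 0, unitary U &
          forall i : 'I_k, exists B, A B /\ rowUnitk hk i v = U *m B *m ctrmx U].
Proof.
move=> A.
set e := [rel a b : 'I_n | vs a 0 b != 0].
have alg i j : connect e i j -> A (rowUnit i (vs j)).
  by apply: reach_alg => i0; exists i0.
pose R j := [set l | connect e j l].
pose j0 := Ordinal hn.
have [j _ jmin] := @arg_minnP _ j0 predT (fun j => #|R j|) isT.
set T := R j.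
have back l : l \in T -> connect e l j.
  rewrite inE => jl.
  have sub : R l \subset R j.
    by apply/subsetP => x; rewrite !inE; apply: connect_trans jl.
  have /eqP E : R l == R j by rewrite eqEcard sub jmin.
  have : j \in R l by rewrite E inE connect0.
  by rewrite inE.
have hk : (#|T| <= n)%N by rewrite -[X in (_ <= X)%N]card_ord max_card.
set k := #|T|.
have pe : perm_eq (enum T ++ enum (~: T)) (ord_tuple n).
  apply: uniq_perm.
  - rewrite cat_uniq !enum_uniq andbT /=; apply/hasPn => x.
    by rewrite !mem_enum inE.
  - exact: (enum_uniq (T:='I_n) predT).
  - move=> x; rewrite mem_cat !mem_enum in_setC orbN; by [].
have [s Es] := tuple_permP pe.
have key (b : 'I_n) : nth j (enum T ++ enum (~: T)) b = s b.
  have := tnth_mktuple (fun i => tnth (ord_tuple n) (s i)) b.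
  by rewrite (tnth_nth j) -Es tnth_ord_tuple.
have sT (b : 'I_n) : (s b \in T) = (b < k)%N.
  rewrite -key nth_cat -cardE; case: ifP => hb.
    by have := @mem_nth _ j (enum T) b; rewrite -cardE mem_enum; apply.
  have hl : (b - k < size (enum (~: T)))%N.
    rewrite -cardE -(ltn_add2l k) subnKC; last by rewrite leqNgt hb.
    by rewrite /k cardsC card_ord ltn_ord.
  by have := mem_nth j hl; rewrite mem_enum in_setC => /negbTE.
exists k, hk; split; first by rewrite /k card_gt0; apply/set0Pn; exists j; rewrite inE connect0.
exists (\row_(c < k) vs j 0 (s (widen_ord hk c))), (perm_mx s); split.
- apply/negP => /eqP v0; case/negP: (hvs j); apply/eqP/rowP => b; rewrite mxE.
  apply/eqP/negPn/negP => hb.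
  have bT : b \in T by rewrite inE connect1.
  have hc : ((s^-1)%g b < k)%N by rewrite -sT permKV.
  have := congr1 (fun M : 'rV_k => M 0 (Ordinal hc)) v0; rewrite !mxE.
  have -> : widen_ord hk (Ordinal hc) = (s^-1)%g b by apply/val_inj.
  by rewrite permKV => hb0; rewrite hb0 eqxx in hb.
- exact: perm_unitary.
move=> i; exists (rowUnit (s (widen_ord hk i)) (vs j)); split.
  by apply/alg/back; rewrite sT /= ltn_ord.
apply/matrixP => a b; rewrite conj_entry rowUnitE rowUnitkE (inj_eq (@perm_inj _ s)).
case: eqP => [hb|hb].
  rewrite mxE; congr (_ * vs j 0 (s _)); exact/val_inj.
suff -> : vs j 0 (s b) = 0 by rewrite mulr0.
apply/eqP/negPn/negP => h.
have : s b \in T by rewrite inE connect1.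
by rewrite sT.
Qed.
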